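(* Let $n\ge3$, $1\le s<n$, and let $D=\mathrm{pdiag}(d_1,\dots,d_n)$ with $d_1\le\dots\le d_s\le 0\le d_{s+1}\le\dots\le d_n$. Then for every integer $k\ge2$ and all $i,j\in[n]$, the $(i,j)$ entry of the max-plus power $D^k$ is $$(D^k)_{ij}=\begin{cases}(k-2)d_n & \text{if } \max(i,j)\le s,\\ \max\{k d_i,(k-2)d_n\} & \text{if } i=j>s,\\ \max\{(k-1)d_{\max(i,j)},(k-2)d_n\} & \text{if } i\neq j,\ \max(i,j)>s.\end{cases}$$
   Context: Max-plus conventions: $\varepsilon=-\infty$, $\oplus=\max$, $\otimes=+$; $(A\otimes B)_{ij}=\max_t(A_{it}+B_{tj})$ and $D^k$ is the $k$-fold max-plus product $D\otimes\cdots\otimes D$. $\mathrm{pdiag}(d_1,\dots,d_n)$ is the $n\times n$ matrix with real diagonal entries $d_1,\dots,d_n$ and all off-diagonal entries equal to the real number $0$. *)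

(* Defs.v *)
From HB Require Import structures.
From mathcomp Require Import all_boot all_order all_algebra.
From mathcomp Require Import reals constructive_ereal.
Set Implicit Arguments. Unset Strict Implicit. Unset Printing Implicit Defensive.
Import Order.TTheory GRing.Theory Num.Theory.
Local Open Scope ring_scope.
Local Open Scope ereal_scope.

Definition mp_mul (R : realDomainType) (n : nat) (A B : 'M[\bar R]_n) : 'M[\bar R]_n :=
  \matrix_(i, j) \big[maxe/-oo]_(t < n) (A i t + B t j).

Definition mp_id (R : realDomainType) (n : nat) : 'M[\bar R]_n :=
  \matrix_(i, j) if i == j then 0 else -oo.

Definition mp_pow (R : realDomainType) (n : nat) (D : 'M[\bar R]_n) (k : nat) : 'M[\bar R]_n :=
  iter k (mp_mul D) (mp_id R n).

(* pdiag(d_1,...,d_n) with 1-based d : nat -> R: entry (i,j) (0-based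
   ordinals) is d_(i+1) on the diagonal and the real number 0 off it. *)
Definition pdiag (R : realDomainType) (n : nat) (d : nat -> R) : 'M[\bar R]_n :=
  \matrix_(i, j) if i == j then (d i.+1)%:E else 0.

(* Main.v *)
Require Import Defs.
From HB Require Import structures.
From mathcomp Require Import all_boot all_order all_algebra.
From mathcomp Require Import reals constructive_ereal.
From mathcomp Require Import lra zify.
Import Order.TTheory GRing.Theory Num.Theory.
Local Open Scope ring_scope.

Ltac mx := repeat (rewrite maxEle; case: ifP => /=;
   [move=> ? | move/negbT; rewrite -ltNge => ?]).

Lemma bm_eq (R : realDomainType) (n : nat) (f : 'I_n -> R) (v1 v2 : R) :
  (forall t, f t <= Num.max v1 v2) -> (exists t1, v1 <= f t1) -> (exists t2, v2 <= f t2) ->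
  (\big[maxe/-oo]_(t < n) (f t)%:E = (Num.max v1 v2)%:E)%E.
Proof.
move=> Hu [t1 H1] [t2 H2]; apply/le_anti/andP; split.
  by apply: bigmax_le => [|t _]; rewrite ?leNye ?lee_fin.
rewrite maxEle; case: ifP => _.
  by apply: le_trans (le_bigmax _ _ t2); rewrite lee_fin.
by apply: le_trans (le_bigmax _ _ t1); rewrite lee_fin.
Qed.

Lemma step (R : realDomainType) (n : nat) (d : nat -> R) k (g : 'I_n -> 'I_n -> R) :
  (forall i j, mp_pow (pdiag n d) k i j = (g i j)%:E) ->
  forall i j, mp_pow (pdiag n d) k.+1 i j =
   (\big[maxe/-oo]_(t < n) (((if i == t then d i.+1 else 0) + g t j)%:E))%E.
Proof.
move=> H i j; rewrite /mp_pow iterS -/(mp_pow _ k) /mp_mul mxE.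
apply: eq_bigr => t _; rewrite H !mxE; by case: eqP.
Qed.

Lemma pow1 (R : realDomainType) (n : nat) (d : nat -> R) i j :
  mp_pow (pdiag n d) 1 i j = ((if i == j then d i.+1 else 0))%:E.
Proof.
rewrite /mp_pow /= /mp_mul mxE (bigD1 j) //= big1.
  by rewrite !mxE eqxx adde0 maxeNy; case: eqP.
move=> t /negbTE tj; rewrite !mxE eq_sym tj; case: eqP => _ //.
Qed.

Lemma neqS n (t j : 'I_n) : t != j -> (t.+1 == j.+1)%N = false.
Proof. by move=> h; rewrite eqSS; apply/negbTE. Qed.

Definition G (R : realDomainType) (d : nat -> R) (n k a b : nat) : R :=
  Num.max ((k.-2)%:R * d n) (if a == b then k%:R * d a else (k.-1)%:R * d (maxn a b)).
Arguments G {R}.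

Ltac fin := move=> *;
  repeat match goal with H : @eq nat _ _ |- _ => clear H
                       | H : @eq (ordinal _) _ _ |- _ => clear H end;
  mx; nra.

Lemma ub (R : realDomainType) (d : nat -> R) (dn x : R) (a b u : nat) :
  0 <= x -> 0 <= dn -> d a <= dn -> d b <= dn -> d u <= dn ->
  d a <= d (maxn a b) -> d b <= d (maxn a b) -> d (maxn a b) <= dn ->
  d (maxn u b) <= dn -> d u <= d (maxn u b) -> d b <= d (maxn u b) ->
  (if a == u then d a else 0) + Num.max (x * dn)
     (if u == b then (x + 2) * d u else (x + 1) * d (maxn u b))
  <= Num.max ((x + 1) * dn)
     (if a == b then (x + 3) * d a else (x + 2) * d (maxn a b)).
Proof.
case: (a =P u) => [<-|au]; case: (a =P b) => [<-|ab] //.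
- rewrite ?eqxx; fin.
- case: (a =P b) => // _; fin.
- case: (u =P a) => [ua|ua]; first by rewrite ua in au.
  fin.
- case: (u =P b) => [->|ub]; fin.
Qed.

Lemma stepG (R : realDomainType) (n s : nat) (d : nat -> R)
  (hn : (3 <= n)%N) (hsn : (s < n)%N)
  (hmono : forall a b : nat, (1 <= a)%N -> (a <= b)%N -> (b <= n)%N -> d a <= d b)
  (hpos : forall a : nat, (s < a)%N -> (a <= n)%N -> 0 <= d a) (c : nat) (i j : 'I_n) :
  (\big[maxe/-oo]_(t < n) (((if i == t then d i.+1 else 0) + G d n c.+2 t.+1 j.+1)%:E)
   = (G d n c.+3 i.+1 j.+1)%:E)%E.
Proof.
have hN : (n.-1 < n)%N by rewrite ltn_predL; lia.
pose N := Ordinal hN.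
have NE : N.+1 = n by rewrite /= prednK //; lia.
have dle : forall t : 'I_n, d t.+1 <= d n by move=> t; apply: hmono => //.
have dmx : forall t u : 'I_n, d (maxn t.+1 u.+1) <= d n.
  by move=> t u; apply: hmono; have := ltn_ord t; have := ltn_ord u; lia.
have dml : forall t u : 'I_n, d t.+1 <= d (maxn t.+1 u.+1).
  by move=> t u; apply: hmono; have := ltn_ord t; have := ltn_ord u; lia.
have dmr : forall t u : 'I_n, d u.+1 <= d (maxn t.+1 u.+1).
  by move=> t u; apply: hmono; have := ltn_ord t; have := ltn_ord u; lia.
have dn0 : 0 <= d n by apply: hpos.
rewrite /G /=.
have e1 : (c.+1)%:R = c%:R + 1 :> R by rewrite -addn1 natrD.
have e2 : (c.+2)%:R = c%:R + 2 :> R by rewrite -addn2 natrD.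
have e3 : (c.+3)%:R = c%:R + 3 :> R by rewrite -addn3 natrD.
rewrite e1 e2 e3.
have x0 : 0 <= c%:R :> R by [].
move: (c%:R) x0 => x x0.
apply: bm_eq.
- move=> t; have := dle i; have := dle j; have := dle t; have := dml i j;
  have := dmr i j; have := dmx i j; have := dmx t j; have := dml t j; have := dmr t j.
  move=> *; have -> : (i == t) = (i.+1 == t.+1)%N by [].
  by apply: ub.
- case: (eqVneq i N) => [iN|iN].
  + exists i; rewrite eqxx iN NE.
    case: (n =P j.+1) => [e|_]; fin.
  + exists N; rewrite (negbTE iN) NE.
    have -> : maxn n j.+1 = n by apply/maxn_idPl; apply: ltn_ord.
    case: (n =P j.+1) => [e|_]; fin.
- case: (eqVneq i j) => [<-|ij].
  + exists i; rewrite !eqxx; fin.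
  + rewrite neqS //; case: (leqP i.+1 j.+1) => h.
    * exists j; rewrite (negbTE ij) eqxx; fin.
    * exists i; rewrite eqxx neqS // (maxn_idPl (ltnW h)); fin.
Qed.

Lemma ub1 (R : realDomainType) (d : nat -> R) (dn : R) (a b u : nat) :
  0 <= dn -> d a <= d (maxn a b) -> d b <= d (maxn a b) ->
  (if a == u then d a else 0) + (if u == b then d u else 0)
  <= Num.max (0%:R * dn)
     (if a == b then 2%:R * d a else 1%:R * d (maxn a b)).
Proof.
case: (a =P u) => [<-|au]; case: (a =P b) => [<-|ab] //.
- rewrite ?eqxx; fin.
- case: (a =P b) => // _; fin.
- case: (u =P a) => [ua|ua]; first by rewrite ua in au.
  fin.
- case: (u =P b) => [->|ub]; fin.
Qed.

Lemma stepG1 (R : realDomainType) (n s : nat) (d : nat -> R)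
  (hn : (3 <= n)%N) (hsn : (s < n)%N)
  (hmono : forall a b : nat, (1 <= a)%N -> (a <= b)%N -> (b <= n)%N -> d a <= d b)
  (hpos : forall a : nat, (s < a)%N -> (a <= n)%N -> 0 <= d a) (i j : 'I_n) :
  (\big[maxe/-oo]_(t < n) (((if i == t then d i.+1 else 0) + (if t == j then d t.+1 else 0))%:E)
   = (G d n 2 i.+1 j.+1)%:E)%E.
Proof.
have dml : forall t u : 'I_n, d t.+1 <= d (maxn t.+1 u.+1).
  by move=> t u; apply: hmono; have := ltn_ord t; have := ltn_ord u; lia.
have dmr : forall t u : 'I_n, d u.+1 <= d (maxn t.+1 u.+1).
  by move=> t u; apply: hmono; have := ltn_ord t; have := ltn_ord u; lia.
have dn0 : 0 <= d n by apply: hpos.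
rewrite /G /=.
apply: bm_eq.
- move=> t; have := dml i j; have := dmr i j.
  move=> *; have -> : (i == t) = (i.+1 == t.+1)%N by [].
  have -> : (t == j) = (t.+1 == j.+1)%N by [].
  by apply: ub1.
- pose v := if (i != 0%N :> nat) && (j != 0%N :> nat) then 0%N
            else if (i != 1%N :> nat) && (j != 1%N :> nat) then 1%N else 2%N.
  have hv : (v < n)%N by rewrite /v; case: ifP => _; [|case: ifP => _]; lia.
  have vi : (v != i :> nat) /\ (v != j :> nat).
    rewrite /v; case: ifP => /andP; [|case: ifP => /andP]; lia.
  exists (Ordinal hv).
  have /negbTE -> : i != Ordinal hv by rewrite eq_sym; apply: (proj1 vi).
  have /negbTE -> : Ordinal hv != j by apply: (proj2 vi).
  fin.
- case: (eqVneq i j) => [<-|ij].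
  + exists i; rewrite !eqxx; fin.
  + rewrite neqS //; case: (leqP i.+1 j.+1) => h.
    * exists j; rewrite (negbTE ij) eqxx; fin.
    * exists i; rewrite eqxx (negbTE ij); fin.
Qed.

Lemma powG (R : realDomainType) (n s : nat) (d : nat -> R)
  (hn : (3 <= n)%N) (hsn : (s < n)%N)
  (hmono : forall a b : nat, (1 <= a)%N -> (a <= b)%N -> (b <= n)%N -> d a <= d b)
  (hpos : forall a : nat, (s < a)%N -> (a <= n)%N -> 0 <= d a) (c : nat) :
  forall i j : 'I_n, mp_pow (pdiag n d) c.+2 i j = (G d n c.+2 i.+1 j.+1)%:E.
Proof.
elim: c => [|c IH] i j.
  rewrite (@step _ _ _ 1 (fun t j : 'I_n => if t == j then d t.+1 else 0)).
    exact: (@stepG1 R n s d hn hsn hmono hpos i j).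
  by move=> ? ?; rewrite pow1.
rewrite (@step _ _ _ _ (fun t j : 'I_n => G d n c.+2 t.+1 j.+1) IH); exact: (@stepG R n s d hn hsn hmono hpos c i j).
Qed.

Theorem proposition4p4 (R : realType) (n s : nat) (d : nat -> R)
  (hn : (3 <= n)%N) (hs1 : (1 <= s)%N) (hsn : (s < n)%N)
  (hmono : forall a b : nat, (1 <= a)%N -> (a <= b)%N -> (b <= n)%N -> d a <= d b)
  (hneg : forall a : nat, (1 <= a)%N -> (a <= s)%N -> d a <= 0)
  (hpos : forall a : nat, (s < a)%N -> (a <= n)%N -> 0 <= d a) :
  forall (k : nat), (2 <= k)%N ->
  forall i j : 'I_n,
    let i1 := i.+1 in let j1 := j.+1 in
    mp_pow (pdiag n d) k i j =
      (if (maxn i1 j1 <= s)%N then (k.-2)%:R * d n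
       else if i1 == j1 then Num.max (k%:R * d i1) ((k.-2)%:R * d n)
       else Num.max ((k.-1)%:R * d (maxn i1 j1)) ((k.-2)%:R * d n))%:E.
Proof.
move=> k hk i j i1 j1.
have [c ->] : exists c, k = c.+2 by exists k.-2; lia.
rewrite (@powG R n s d hn hsn hmono hpos) /G /i1 /j1.
have dn0 : 0 <= d n by apply: hpos.
have x0 : 0 <= (c.+2.-2)%:R :> R by [].
have x1 : 0 <= (c.+2.-1)%:R :> R by [].
have x2 : 0 <= (c.+2)%:R :> R by [].
move: ((c.+2.-2)%:R) ((c.+2.-1)%:R) ((c.+2)%:R) x0 x1 x2 => y0 y1 y2 x0 x1 x2.
congr (_%:E).
case: (leqP (maxn i.+1 j.+1) s) => hm.
  have ha : d i.+1 <= 0 by apply: hneg => //; lia.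
  have hb : d (maxn i.+1 j.+1) <= 0 by apply: hneg => //; lia.
  case: eqP => _; apply/max_idPl; nra.
by case: eqP => _; rewrite maxC.
Qed.
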